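(* Let $W\in\mathbb{R}^{m\times n}$, $x_1,x_2\in\mathbb{R}^n$, $\ell(t)=(1-t)x_1+tx_2$, and let $0=t_1\le t_2\le\dots\le t_{n_t}=1$. Writing $x_{t_k}=\ell(t_k)$, we have $$\sum_{k=1}^{n_t-1}\|\operatorname{ReLU}(Wx_{t_k})-\operatorname{ReLU}(Wx_{t_{k+1}})\|_2^2\le\|\operatorname{ReLU}(Wx_1)-\operatorname{ReLU}(Wx_2)\|_2^2$$ and $$\sum_{k=1}^{n_t-1}\|\operatorname{ReLU}(Wx_{t_k})-\operatorname{ReLU}(Wx_{t_{k+1}})\|_2\le\sqrt{n_t}\,\|\operatorname{ReLU}(Wx_1)-\operatorname{ReLU}(Wx_2)\|_2.$$
   Context: $\operatorname{ReLU}(y)=\max(y,0)$ applied componentwise. *)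

(* Defs.v *)
From mathcomp Require Import all_boot all_order all_algebra.
Set Implicit Arguments. Unset Strict Implicit. Unset Printing Implicit Defensive.
Import Order.TTheory GRing.Theory Num.Theory.
Local Open Scope ring_scope.

Definition relu (R : realDomainType) (m n : nat) (A : 'M[R]_(m, n)) : 'M[R]_(m, n) :=
  map_mx (fun y => Num.max y 0) A.

Definition sqnorm2 (R : realDomainType) (m : nat) (v : 'cV[R]_m) : R :=
  \sum_(i < m) (v i 0) ^+ 2.

Definition norm2 (R : rcfType) (m : nat) (v : 'cV[R]_m) : R :=
  Num.sqrt (sqnorm2 v).

Definition segline (R : pzRingType) (n : nat) (x1 x2 : 'cV[R]_n) (t : R) : 'cV[R]_n :=
  (1 - t) *: x1 + t *: x2.

(* Main.v *)
Require Import Defs.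
From mathcomp Require Import all_boot all_order all_algebra.
From mathcomp Require Import ring lra zify.
Import Order.TTheory GRing.Theory Num.Theory.
Local Open Scope ring_scope.

Lemma mono_sq (R : realDomainType) (g : nat -> R) N :
  (forall k, (k < N)%N -> g k <= g k.+1) ->
  0 <= g N - g 0 /\ \sum_(0 <= k < N) (g k - g k.+1) ^+ 2 <= (g N - g 0) ^+ 2.
Proof.
elim: N => [|N IH] H.
  by rewrite big_geq // subrr expr0n /= lexx.
have [h1 h2] := IH (fun k hk => H k (ltnW hk)).
have h3 := H N (ltnSn N).
rewrite big_nat_recr //=.
have h4 : 0 <= (g N.+1 - g N) * (g N - g 0) by apply: mulr_ge0; lra.
split; first lra.
have -> : (g N.+1 - g 0) ^+ 2 = (g N - g 0) ^+ 2 + (g N - g N.+1) ^+ 2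
   + 2 * ((g N.+1 - g N) * (g N - g 0)) by ring.
lra.
Qed.

Lemma mono_sq2 (R : realDomainType) (g : nat -> R) N :
  ((forall k, (k < N)%N -> g k <= g k.+1) \/
   (forall k, (k < N)%N -> g k.+1 <= g k)) ->
  \sum_(0 <= k < N) (g k - g k.+1) ^+ 2 <= (g 0 - g N) ^+ 2.
Proof.
case=> H.
  have [_ h] := mono_sq _ _ _ H.
  by rewrite -sqrrN opprB.
have H' : forall k, (k < N)%N -> - g k <= - g k.+1.
  by move=> k hk; rewrite lerN2; apply: H.
have [_ h] := mono_sq _ _ _ H'.
have -> : (g 0 - g N) ^+ 2 = (- g N - - g 0) ^+ 2 by ring.
apply: le_trans h; apply: ler_sum => k _.
by rewrite -sqrrN opprB opprK addrC.
Qed.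

Lemma cs_sqrt (R : rcfType) (s : nat -> R) N :
  (forall k, 0 <= s k) ->
  \sum_(0 <= k < N) Num.sqrt (s k) <= Num.sqrt (N%:R * \sum_(0 <= k < N) s k).
Proof.
move=> hs.
set A := \sum_(0 <= k < N) Num.sqrt (s k).
have hA : 0 <= A by apply: sumr_ge0 => k _; exact: sqrtr_ge0.
rewrite -(ger0_norm hA) -sqrtr_sqr ler_sqrt; last first.
  by apply: mulr_ge0; [exact: ler0n | apply: sumr_ge0].
have key : 2 * A ^+ 2 <= 2 * (N%:R * \sum_(0 <= k < N) s k).
  rewrite expr2 {1}/A mulr_suml.
  apply: (@le_trans _ _ (\sum_(0 <= i < N) \sum_(0 <= j < N) (s i + s j))).
    rewrite mulr_sumr; apply: ler_sum => i _; rewrite /A mulr_sumr mulr_sumr.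
    apply: ler_sum => j _.
    rewrite -{2}(sqr_sqrtr (hs i)) -{2}(sqr_sqrtr (hs j)).
    set a := Num.sqrt (s i); set b := Num.sqrt (s j).
    have h : 0 <= (a - b) ^+ 2 by exact: sqr_ge0.
    have -> : a ^+ 2 + b ^+ 2 = (a - b) ^+ 2 + 2 * (a * b) by ring.
    lra.
  rewrite (eq_bigr (fun i => s i *+ N + \sum_(0 <= j < N) s j)); last first.
    by move=> i _; rewrite big_split /= sumr_const_nat subn0.
  move: hA; rewrite /A; move: (\sum_(0 <= k < N) Num.sqrt (s k)) => A' _.
  rewrite big_split /= sumrMnl.
  have -> : \sum_(0 <= i < N) \sum_(0 <= j < N) s j = (\sum_(0 <= j < N) s j) *+ N.
    by rewrite sumr_const_nat subn0.
  move: (\sum_(0 <= j < N) s j) => B.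
  rewrite -[B *+ N]mulr_natr -[_ *+ 2]mulr_natr.
  rewrite (mulrC N%:R B) ?mul1r; lra.
by rewrite -subr_ge0 -(pmulr_rge0 _ (ltr0n R 2)) mulrBr subr_ge0.
Qed.

Lemma coordE (R : rcfType) (m n : nat) (W : 'M[R]_(m, n)) (x1 x2 : 'cV[R]_n)
  (u v : R) (i : 'I_m) :
  (relu (W *m segline x1 x2 u) - relu (W *m segline x1 x2 v)) i 0 =
  Num.max ((1 - u) * (W *m x1) i 0 + u * (W *m x2) i 0) 0
  - Num.max ((1 - v) * (W *m x1) i 0 + v * (W *m x2) i 0) 0.
Proof.
rewrite /relu /segline !mulmxDr -!scalemxAr.
move: (W *m x1) (W *m x2) => A B.
by rewrite !mxE.
Qed.

Lemma coordE0 (R : rcfType) (m n : nat) (W : 'M[R]_(m, n)) (x1 x2 : 'cV[R]_n)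
  (i : 'I_m) :
  (relu (W *m x1) - relu (W *m x2)) i 0 =
  Num.max ((W *m x1) i 0) 0 - Num.max ((W *m x2) i 0) 0.
Proof.
rewrite /relu; move: (W *m x1) (W *m x2) => A B.
by rewrite !mxE.
Qed.

Theorem lemma15 (R : rcfType) (m n : nat) (W : 'M[R]_(m, n))
  (x1 x2 : 'cV[R]_n) (nt : nat) (t : nat -> R) :
  (0 < nt)%N ->
  t 0%N = 0 -> t nt.-1 = 1 ->
  (forall k : nat, (k.+1 < nt)%N -> t k <= t k.+1) ->
  \sum_(0 <= k < nt.-1)
     sqnorm2 (relu (W *m segline x1 x2 (t k)) - relu (W *m segline x1 x2 (t k.+1)))
    <= sqnorm2 (relu (W *m x1) - relu (W *m x2))
  /\
  \sum_(0 <= k < nt.-1)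
     norm2 (relu (W *m segline x1 x2 (t k)) - relu (W *m segline x1 x2 (t k.+1)))
    <= Num.sqrt (nt%:R) * norm2 (relu (W *m x1) - relu (W *m x2)).
Proof.
move=> hnt t0 t1 ht.
set N := nt.-1.
have htN : forall k, (k < N)%N -> t k <= t k.+1.
  by move=> k hk; apply: ht; rewrite /N in hk; lia.
have P1 : \sum_(0 <= k < N)
     sqnorm2 (relu (W *m segline x1 x2 (t k)) - relu (W *m segline x1 x2 (t k.+1)))
    <= sqnorm2 (relu (W *m x1) - relu (W *m x2)).
  rewrite /sqnorm2 exchange_big /=.
  apply: ler_sum => i _.
  under eq_bigr => k _ do rewrite coordE.
  rewrite coordE0.
  set a := (W *m x1) i 0; set b := (W *m x2) i 0.
  have M : (forall k, (k < N)%N -> Num.max ((1 - t k) * a + t k * b) 0 <= Num.max ((1 - t k.+1) * a + t k.+1 * b) 0) \/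
           (forall k, (k < N)%N -> Num.max ((1 - t k.+1) * a + t k.+1 * b) 0 <= Num.max ((1 - t k) * a + t k * b) 0).
    have [hab|hab] := lerP a b; [left|right] => k hk; apply: le_max2 => //;
      have h : 0 <= t k.+1 - t k by rewrite subr_ge0; exact: htN.
    - have h2 : 0 <= b - a by rewrite subr_ge0.
      have := mulr_ge0 h h2; nra.
    - have h2 : 0 <= a - b by rewrite subr_ge0 ltW.
      have := mulr_ge0 h h2; nra.
  have := mono_sq2 _ (fun k => Num.max ((1 - t k) * a + t k * b) 0) N M => /=.
  by rewrite t0 /N t1 subr0 subrr !mul1r !mul0r addr0 add0r.
split => //.
have hs : forall k, 0 <= sqnorm2 (relu (W *m segline x1 x2 (t k)) - relu (W *m segline x1 x2 (t k.+1))).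
  by move=> k; apply: sumr_ge0 => i _; exact: sqr_ge0.
have hS : forall v : 'cV[R]_m, 0 <= sqnorm2 v.
  by move=> v; apply: sumr_ge0 => i _; exact: sqr_ge0.
rewrite /norm2 -sqrtrM ?ler0n //.
apply: (le_trans (cs_sqrt _ (fun k => sqnorm2 (relu (W *m segline x1 x2 (t k)) - relu (W *m segline x1 x2 (t k.+1)))) N hs)).
rewrite ler_sqrt; last by apply: mulr_ge0; rewrite ?ler0n ?hS.
apply: ler_pM; rewrite ?ler0n //.
- by apply: sumr_ge0 => k _; exact: hs.
- by rewrite ler_nat /N; lia.
Qed.
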